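(* For all words $z\in\{0,1\}^*$ and all integers $k\geq 1$, \[V([z10^{2k}]_F)=V([z10^{2k-2}]_F)+V([z(01)^k]_F).\]
   Context: Fibonacci numbers: $F_0=0$, $F_1=1$, $F_{m+2}=F_{m+1}+F_m$. For a word $k_m\cdots k_0$ of nonnegative integer digits, $[k_m\cdots k_0]_F=\sum_{i=0}^m k_iF_{i+2}$; $u^j$ denotes $j$ concatenated copies of $u$. Standard Fibonacci words: $f_{-1}=b$, $f_0=a$, $f_{m+1}=f_mf_{m-1}$. The Fibonacci word ${\bf f}=\lim f_m$, with prefix of length $j$ denoted ${\bf f}(0..j]$. $V(N)$ is the number of factorizations of ${\bf f}(0..N]$ as $f_m^{k_m}\cdots f_0^{k_0}$ with all $k_i\geq 0$ (into standard words $f_i$, $i\geq0$, in non-strictly decreasing order of index), counted up to leading zero exponents; $V(0)=1$. *)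

(* Defs.v *)
From mathcomp Require Import all_boot.
Set Implicit Arguments. Unset Strict Implicit. Unset Printing Implicit Defensive.

Fixpoint fib (n : nat) : nat :=
  match n with
  | 0 => 0
  | 1 => 1
  | (m.+1 as p).+1 => fib p + fib m
  end.

(* [k_m ... k_0]_F = sum_i k_i F_{i+2}; the word is written most significant
   digit first, so k_i is the i-th letter of the reversed word. *)
Definition fibval (w : seq nat) : nat :=
  \sum_(i < size w) nth 0 (rev w) i * fib i.+2.

Definition bits (z : seq bool) : seq nat := map nat_of_bool z.

Definition letter_a : bool := false.
Definition letter_b : bool := true.

(* Standard Fibonacci words f_m for m >= 0 (f_{-1} = b):
   f_0 = a, f_1 = f_0 f_{-1} = ab, f_{m+2} = f_{m+1} f_m. *)
Fixpoint stdword (m : nat) : seq bool :=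
  match m with
  | 0 => [:: letter_a]
  | 1 => [:: letter_a; letter_b]
  | (p.+1 as q).+1 => stdword q ++ stdword p
  end.

(* Prefix of length N of the infinite Fibonacci word f = lim f_m.
   Since |f_N| = F_{N+2} >= N and each f_m is a prefix of f_{m+1},
   the length-N prefix of f is the length-N prefix of f_N. *)
Definition fibprefix (N : nat) : seq bool := take N (stdword N).

(* The word f_m^{k_m} ... f_0^{k_0} for the exponent list ks = [k_0; ...; k_m]. *)
Definition factor_word (ks : seq nat) : seq bool :=
  flatten [seq flatten (nseq (nth 0 ks i) (stdword i)) | i <- rev (iota 0 (size ks))].

(* ks is a factorization of the length-N prefix, normalized so that the
   leading exponent k_m is nonzero (counting up to leading zero exponents). *)
Definition is_factorization (N : nat) (ks : seq nat) : bool :=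
  (last 1 ks != 0) && (factor_word ks == fibprefix N).

Fixpoint allseqs (L b : nat) : seq (seq nat) :=
  match L with
  | 0 => [:: [::]]
  | L'.+1 => [seq x :: s | x <- iota 0 b.+1, s <- allseqs L' b]
  end.

(* This is no
   restriction: every |f_i| >= 1 and |f_i| >= i+1, so a normalized
   factorization of a word of length N has m+1 <= N (or is empty) and all
   k_i <= N. *)
Definition candidates (N : nat) : seq (seq nat) :=
  flatten [seq allseqs L N | L <- iota 0 N.+1].

(* V(N): number of factorizations of f(0..N]; V(0) = 1 (empty factorization). *)
Definition V (N : nat) : nat := count (is_factorization N) (candidates N).

(* Main.v *)
Require Import Defs.
From mathcomp Require Import all_boot.
From mathcomp Require Import zify.
Set Implicit Arguments. Unset Strict Implicit. Unset Printing Implicit Defensive.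

Definition img (c : bool) : seq bool := if c then [:: false] else [:: false; true].
Definition phi (y : seq bool) : seq bool := flatten (map img y).

Lemma phi_nil : phi [::] = [::]. Proof. by []. Qed.
Lemma phi_cons c y : phi (c :: y) = img c ++ phi y. Proof. by []. Qed.
Lemma phi_cat x y : phi (x ++ y) = phi x ++ phi y.
Proof. by rewrite /phi map_cat flatten_cat. Qed.
Lemma phi_rcons x c : phi (rcons x c) = phi x ++ img c.
Proof. by rewrite -cats1 phi_cat /phi /= cats0. Qed.
Lemma phi_flatten l : phi (flatten l) = flatten (map phi l).
Proof. elim: l => [|w l IH] //=; by rewrite phi_cat IH. Qed.
Lemma phi_nseqb k : phi (nseq k true) = nseq k false.
Proof. elim: k => [|k IH] //=. by rewrite phi_cons IH. Qed.

Lemma size_phi y : size (phi y) = size y + count (fun c => ~~ c) y.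
Proof. elim: y => [|c y IH] //=; rewrite phi_cons size_cat IH; case: c => /=; lia. Qed.
Lemma count_phi y : count (fun c => ~~ c) (phi y) = size y.
Proof. elim: y => [|c y IH] //=; rewrite phi_cons count_cat IH; case: c => /=; lia. Qed.

Lemma phi_head y : head false (phi y) = false.
Proof. by case: y => [|[] y]. Qed.

Lemma phi_eq0 y : (phi y == [::]) = (y == [::]).
Proof. by case: y => [|[] y]. Qed.

Lemma phi_inj : injective phi.
Proof.
elim=> [|c y IH] [|d z] //=; rewrite ?phi_cons ?phi_nil.
- by case: d.
- by case: c.
case: c; case: d => /= H.
- case: H => /IH ->. done.
- case: H => H. have := phi_head y. by rewrite H.
- case: H => H. have := phi_head z. by rewrite -H.
- case: H => /IH ->. done.
Qed.

Lemma eqseq_rcat (T : eqType) (s1 s2 s3 s4 : seq T) :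
  size s3 = size s4 -> (s1 ++ s3 == s2 ++ s4) = (s1 == s2) && (s3 == s4).
Proof.
move=> H. case E: (size s1 == size s2).
  by rewrite eqseq_cat //; apply/eqP.
apply/idP/idP.
  move/eqP=> /(congr1 size); rewrite !size_cat H => H'.
  by move: E; rewrite (_ : size s1 = size s2) ?eqxx //; lia.
by case/andP=> /eqP E1; move: E; rewrite E1 eqxx.
Qed.

Lemma phi_not_bb y x : phi y != x ++ [:: true; true].
Proof.
case/lastP: y => [|y c]; first by case: x.
rewrite phi_rcons; apply/negP => /eqP/(congr1 (fun s => (head false (rev s), nth false (rev s) 1))).
by case: c; rewrite !rev_cat.
Qed.

Lemma fibSS n : fib n.+2 = fib n.+1 + fib n. Proof. by []. Qed.

Lemma phi_std m : phi (stdword m) = stdword m.+1.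
Proof.
suff: phi (stdword m) = stdword m.+1 /\ phi (stdword m.+1) = stdword m.+2 by case.
elim: m => [|m [IH1 IH2]]; first by [].
split=> //. by rewrite [stdword m.+3]/= phi_cat IH2 IH1.
Qed.

Lemma size_std m : size (stdword m) = fib m.+2.
Proof.
suff: size (stdword m) = fib m.+2 /\ size (stdword m.+1) = fib m.+3 by case.
elim: m => [|m [IH1 IH2]]; first by [].
split=> //. by rewrite [stdword m.+2]/= size_cat IH2 IH1.
Qed.

Lemma fib_ge n : n < fib n.+2.
Proof.
suff: n < fib n.+2 /\ n.+1 < fib n.+3 by case.
elim: n => [|n [IH1 IH2]]; first by [].
split=> //. rewrite fibSS. have : 0 < fib n.+2 by lia. lia.
Qed.

Lemma fib_pos n : 0 < fib n.+1.
Proof. case: n => // n; have := fib_ge n; lia. Qed.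

Lemma std_prefix m m' : m <= m' -> exists s, stdword m' = stdword m ++ s.
Proof.
move=> H; elim: m' H => [|m' IH]; first by rewrite leqn0 => /eqP ->; exists [::]; rewrite cats0.
rewrite leq_eqVlt => /orP [/eqP ->|]; first by exists [::]; rewrite cats0.
rewrite ltnS => Hm; have [s Hs] := IH Hm.
case: m' IH Hs Hm => [|m'] _ Hs Hm.
  by move: Hm; rewrite leqn0 => /eqP ->; exists [:: true].
by exists (s ++ stdword m'); rewrite (_ : stdword m'.+2 = stdword m'.+1 ++ stdword m') // Hs catA.
Qed.

Notation fw := factor_word.

Lemma flatten_nseq1 (T : Type) k (x : T) : flatten (nseq k [:: x]) = nseq k x.
Proof. by elim: k => //= k ->. Qed.

Lemma phi_flatten_nseq k w : phi (flatten (nseq k w)) = flatten (nseq k (phi w)).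
Proof. by rewrite phi_flatten map_nseq. Qed.

Lemma fw_cons k s : fw (k :: s) = phi (fw s) ++ nseq k false.
Proof.
rewrite /factor_word /=.
have E : rev (iota 0 (size s).+1) = [seq i.+1 | i <- rev (iota 0 (size s))] ++ [:: 0].
  by rewrite /= rev_cons -cats1 map_rev (iotaDl 1 0).
rewrite E map_cat flatten_cat /= cats0 flatten_nseq1; congr (_ ++ _).
rewrite phi_flatten -map_comp -map_comp; congr flatten; apply: eq_map => i /=.
by rewrite phi_flatten_nseq phi_std.
Qed.

Lemma fw_rcons k s : fw (rcons s k) = flatten (nseq k (stdword (size s))) ++ fw s.
Proof.
rewrite /factor_word size_rcons -addn1 iotaD add0n /= cats1 rev_rcons /=.
rewrite nth_rcons ltnn eqxx; congr (_ ++ _); congr flatten.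
apply/eq_in_map => i; rewrite mem_rev mem_iota /= => Hi.
by rewrite nth_rcons Hi.
Qed.

Lemma fw_rcons0 s : fw (rcons s 0) = fw s.
Proof. by rewrite fw_rcons. Qed.

Lemma size_flatten_nseq (T : Type) k (w : seq T) : size (flatten (nseq k w)) = k * size w.
Proof. by elim: k => //= k IH; rewrite size_cat IH mulSn. Qed.

Lemma fw_all_le s : all (fun k => k <= size (fw s)) s.
Proof.
elim: s => [|k s IH] //=; rewrite fw_cons size_cat size_nseq size_phi.
apply/andP; split; first lia.
apply: sub_all IH => j /=; lia.
Qed.

Lemma fw_head s : head false (fw s) = false.
Proof.
case: s => [|k s]; first by rewrite /factor_word.
rewrite fw_cons; case E: (phi (fw s)) => [|c r].
  by case: k.
by have := phi_head (fw s); rewrite E.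
Qed.

Lemma sum_iota (F : nat -> nat) n : sumn [seq F i | i <- iota 0 n] = \sum_(i < n) F i.
Proof. by rewrite sumnE big_map -(big_mkord xpredT) /index_iota subn0. Qed.

Lemma count_allseqs_cons L B (P : pred (seq nat)) :
  count P (allseqs L.+1 B) = \sum_(k < B.+1) count (fun s => P ((k : nat) :: s)) (allseqs L B).
Proof.
rewrite (_ : allseqs L.+1 B = flatten [seq [seq x :: s | s <- allseqs L B] | x <- iota 0 B.+1]) //.
rewrite count_flatten -map_comp -(sum_iota (fun k => count (fun s => P (k :: s)) (allseqs L B))); congr sumn; apply: eq_map => k /=.
by rewrite count_map.
Qed.

Lemma count_allseqs_rcons L B (P : pred (seq nat)) :
  count P (allseqs L.+1 B) = \sum_(k < B.+1) count (fun s => P (rcons s (k : nat))) (allseqs L B).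
Proof.
elim: L P => [|L IH] P.
  rewrite count_allseqs_cons; apply: eq_bigr => k _ //.
rewrite count_allseqs_cons.
rewrite (eq_bigr (fun k : 'I_B.+1 => \sum_(j < B.+1) count (fun s => P ((k:nat) :: rcons s (j:nat))) (allseqs L B))); last first.
  by move=> k _; rewrite IH.
rewrite exchange_big /=; apply: eq_bigr => j _.
by rewrite count_allseqs_cons.
Qed.

Definition G L B x := count (fun ks => fw ks == x) (allseqs L B).
Definition Fac x := G (size x) (size x) x.

Lemma G0 B x : G 0 B x = (x == [::]).
Proof. by rewrite /G /= /factor_word /= addn0 eq_sym. Qed.

Lemma allseqs_size L B : all (fun s => size s == L) (allseqs L B).
Proof.
elim: L => [|L IH] //.
apply/all_allpairsP => x t _ Ht /=.
by have /allP := IH; move/(_ t Ht).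
Qed.

Lemma count_allseqs_B L B (P : pred (seq nat)) :
  (forall s, P s -> all (fun k => k <= B) s) ->
  count P (allseqs L B.+1) = count P (allseqs L B).
Proof.
elim: L P => [|L IH] P HP //.
rewrite !count_allseqs_cons big_ord_recr /=.
rewrite (eq_count (a2 := pred0)); last first.
  move=> s /=; apply/negP => /HP /= /andP []; by rewrite ltnn.
rewrite count_pred0 addn0; apply: eq_bigr => k _.
apply: IH => s /HP /= /andP [] //.
Qed.

Lemma G_stabB L B x : size x <= B -> G L B.+1 x = G L B x.
Proof.
move=> H; apply: count_allseqs_B => s /eqP E.
by apply: sub_all (fw_all_le s) => k; rewrite E => /leq_trans; apply.
Qed.

Lemma G_stabL L B x : size x <= L -> G L.+1 B x = G L B x.
Proof.
move=> H; rewrite /G count_allseqs_rcons big_ord_recl /=.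
rewrite (eq_in_count (a2 := fun s => fw s == x)); last by move=> s _ /=; rewrite fw_rcons0.
rewrite big1 ?addn0 // => i _.
rewrite (eq_in_count (a2 := pred0)) ?count_pred0 // => s Hs /=.
have /allP/(_ s Hs)/eqP Es := allseqs_size L B.
apply/negP => /eqP E.
have := congr1 size E; rewrite fw_rcons size_cat size_flatten_nseq size_std Es.
have := fib_ge L; rewrite /bump leq0n add1n; nia.
Qed.

Lemma G_Fac L B x : size x <= L -> size x <= B -> G L B x = Fac x.
Proof.
move=> HL HB; rewrite /Fac.
have HBs : forall d, G L (size x + d) x = G L (size x) x.
  by elim=> [|d IH]; rewrite ?addn0 // addnS G_stabB ?IH //; lia.
have HLs : forall d, G (size x + d) (size x) x = G (size x) (size x) x.
  by elim=> [|d IH]; rewrite ?addn0 // addnS G_stabL ?IH //; lia.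
rewrite -(subnKC HB) HBs -(subnKC HL) HLs //.
Qed.

Lemma sum_norm M B x :
  \sum_(L < M.+1) count (fun ks => (last 1 ks != 0) && (fw ks == x)) (allseqs L B) = G M B x.
Proof.
elim: M => [|M IH].
  by rewrite big_ord1 /G /=.
rewrite big_ord_recr /= IH /G count_allseqs_rcons count_allseqs_rcons.
rewrite !big_ord_recl /=.
rewrite (eq_in_count (a1 := fun s => _ && _) (a2 := pred0)); last first.
  by move=> s _ /=; rewrite last_rcons.
rewrite count_pred0 add0n.
rewrite (eq_in_count (a1 := fun s => fw (rcons s 0) == x) (a2 := fun s => fw s == x)); last first.
  by move=> s _ /=; rewrite fw_rcons0.
congr (_ + _); apply: eq_bigr => i _.
by apply: eq_in_count => s _ /=; rewrite last_rcons.
Qed.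

Lemma V_G N : V N = G N N (fibprefix N).
Proof.
rewrite /V /candidates count_flatten -map_comp.
rewrite (sum_iota (fun L => count (is_factorization N) (allseqs L N))).
by rewrite -sum_norm.
Qed.

Lemma V_Fac N : V N = Fac (fibprefix N).
Proof. by rewrite V_G G_Fac // size_take; case: ifP => //; lia. Qed.

Lemma G_rec L B x :
  G L.+1 B x = \sum_(k < B.+1) count (fun s => phi (fw s) ++ nseq k false == x) (allseqs L B).
Proof. rewrite /G count_allseqs_cons; apply: eq_bigr => k _; apply: eq_count => s; by rewrite fw_cons. Qed.

Lemma last_nseqS (T : Type) (x0 c : T) n : last x0 (nseq n.+1 c) = c.
Proof. by elim: n => //= n. Qed.

Lemma eq_phi_nseq z y m k :
  (phi z ++ nseq k false == phi (rcons y false) ++ nseq m false) =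
  (k <= m) && (z == rcons y false ++ nseq (m - k) true).
Proof.
case: (leqP k m) => Hk /=.
  rewrite -(subnK Hk) nseqD catA eqseq_rcat ?size_nseq // eqxx andbT.
  by rewrite subnK // -phi_nseqb -phi_cat (inj_eq phi_inj).
rewrite -(subnK (ltnW Hk)) nseqD catA eqseq_rcat ?size_nseq // eqxx andbT.
apply/negP => /eqP /(congr1 (last true)).
rewrite phi_rcons !last_cat /=.
have E : k - m = (k - m).-1.+1 by lia.
by rewrite E last_nseqS.
Qed.

Lemma Fac_phi u m :
  Fac (phi (rcons u false ++ nseq m true)) = \sum_(i < m.+1) Fac (rcons u false ++ nseq i true).
Proof.
set y := rcons u false.
have Hy : 0 < count (fun c => ~~ c) y by rewrite /y -cats1 count_cat /=; lia.
rewrite phi_cat phi_nseqb.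
set L := (size (phi y) + m).-1.
have HL : size (phi y ++ nseq m false) = L.+1.
  rewrite size_cat size_nseq /L size_phi; lia.
rewrite /Fac HL G_rec.
have Hm : m.+1 <= L.+2 by rewrite /L size_phi; lia.
rewrite (eq_bigr (fun k : 'I_L.+2 => if k < m.+1 then G L L.+1 (y ++ nseq (m - k) true) else 0)); last first.
  move=> k _; rewrite ltnS; case: ifP => Hk.
    by apply: eq_count => s; rewrite eq_phi_nseq Hk.
  by rewrite (eq_count (a2 := pred0)) ?count_pred0 // => s; rewrite /= eq_phi_nseq Hk.
rewrite -big_mkcond -(big_ord_widen _ (fun k => G L L.+1 (y ++ nseq (m - k) true)) Hm).
rewrite (reindex_inj rev_ord_inj) /=; apply: eq_bigr => i _.
rewrite subKn; last by have := ltn_ord i; lia.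
apply: G_Fac; rewrite size_cat size_nseq /L size_phi -subn1; have := ltn_ord i; move: Hy; clearbody y; generalize (count [eta negb] y) => c; set sy := size y; lia.
Qed.

Lemma Fac_bb x : Fac (x ++ [:: true; true]) = 0.
Proof.
rewrite /Fac size_cat addn2 G_rec big1 // => k _.
rewrite (eq_count (a2 := pred0)) ?count_pred0 // => s /=.
case: k => [[|k] Hk] /=.
  rewrite cats0; apply/negbTE; exact: phi_not_bb.
apply/negP => /eqP /(congr1 (last true)); by rewrite !last_cat last_nseqS.
Qed.

Lemma Fac_nil : Fac [::] = 1. Proof. by vm_compute. Qed.
Lemma Fac_a : Fac [:: false] = 1. Proof. by vm_compute. Qed.
Lemma Fac_ab : Fac [:: false; true] = 1. Proof. by vm_compute. Qed.
Lemma Fac_aa : Fac [:: false; false] = 1. Proof. by vm_compute. Qed.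

Definition Yval (s : seq nat) : nat := \sum_(i < size s) nth 0 (rev s) i * fib i.+1.
Definition X (w : seq bool) := fibval (bits w).
Definition Y (w : seq bool) := Yval (bits w).

Lemma fibval_rcons s d : fibval (rcons s d) = fibval s + Yval s + d.
Proof.
rewrite /fibval /Yval size_rcons big_ord_recl rev_rcons.
rewrite (eq_bigr (fun i : 'I_(size s) => nth 0 (rev s) i * fib i.+2 + nth 0 (rev s) i * fib i.+1)); last first.
  by move=> i _; rewrite lift0 fibSS mulnDr.
rewrite big_split /= muln1; lia.
Qed.

Lemma Yval_rcons s d : Yval (rcons s d) = fibval s + d.
Proof.
rewrite /fibval /Yval size_rcons big_ord_recl rev_rcons.
rewrite (eq_bigr (fun i : 'I_(size s) => nth 0 (rev s) i * fib i.+2)); last first.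
  by move=> i _; rewrite lift0.
rewrite /= muln1; lia.
Qed.

Lemma bits_rcons w d : bits (rcons w d) = rcons (bits w) (nat_of_bool d).
Proof. by rewrite /bits map_rcons. Qed.

Lemma X_rcons w d : X (rcons w d) = X w + Y w + d.
Proof. by rewrite /X /Y bits_rcons fibval_rcons. Qed.
Lemma Y_rcons w d : Y (rcons w d) = X w + d.
Proof. by rewrite /X /Y bits_rcons Yval_rcons. Qed.
Lemma X_nil : X [::] = 0. Proof. by rewrite /X /fibval big_ord0. Qed.
Lemma Y_nil : Y [::] = 0. Proof. by rewrite /Y /Yval big_ord0. Qed.

Lemma Y_le_X w : Y w <= X w.
Proof. case/lastP: w => [|w d]; first by rewrite X_nil Y_nil. rewrite X_rcons Y_rcons; lia. Qed.

Lemma nb_le1 (d : bool) : nat_of_bool d <= 1. Proof. by case: d. Qed.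

Lemma XY_bound w : X w + 2 <= fib (size w).+3 /\ Y w + 1 <= fib (size w).+2.
Proof.
elim/last_ind: w => [|w d [IH1 IH2]]; first by rewrite X_nil Y_nil.
rewrite X_rcons Y_rcons size_rcons.
have e1 := fibSS (size w).+2; have e2 := fibSS (size w).+1; have := nb_le1 d; lia.
Qed.

Definition Psi (w : seq bool) : seq bool :=
  foldl (fun y d => if d then phi (rcons y true) else phi y) [::] w.

Lemma Psi_rcons w d : Psi (rcons w d) = if d then phi (rcons (Psi w) true) else phi (Psi w).
Proof. by rewrite /Psi foldl_rcons. Qed.

Lemma size_Psi w : size (Psi w) = X w /\ count (fun c => ~~ c) (Psi w) = Y w.
Proof.
elim/last_ind: w => [|w d [IH1 IH2]]; first by rewrite X_nil Y_nil.
rewrite Psi_rcons X_rcons Y_rcons; case: d; rewrite size_phi count_phi ?size_rcons -?cats1 ?count_cat /= IH1 IH2; lia.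
Qed.

Lemma Psi_prefix w : exists s, stdword (size w).+1 = Psi w ++ s.
Proof.
elim/last_ind: w => [|w d [s Hs]]; first by exists [:: false; true].
have Hsz : size (Psi w) < size (stdword (size w).+1).
  have [H1 _] := XY_bound w; have [H2 _] := size_Psi w. rewrite size_std; lia.
move: Hs Hsz; case: s => [|c s] Hs Hsz; first by rewrite Hs cats0 ltnn in Hsz.
rewrite size_rcons -phi_std Hs phi_cat phi_cons Psi_rcons.
case: d.
  by exists (behead (img c) ++ phi s); rewrite phi_rcons -catA; clear Hs; case: c.
by exists (img c ++ phi s).
Qed.

Lemma fibprefix_Psi w : fibprefix (X w) = Psi w.
Proof.
have [s Hs] := Psi_prefix w.
have [H1 _] := size_Psi w.
set M := maxn (X w) (size w).+1.
have [t Ht] := std_prefix (leq_maxl (X w) (size w).+1).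
have [t' Ht'] := std_prefix (leq_maxr (X w) (size w).+1).
have E : take (X w) (stdword M) = Psi w.
  by rewrite Ht' Hs -catA take_cat H1 ltnn subnn take0 cats0.
rewrite -E /fibprefix Ht take_cat size_std.
have := fib_ge (X w); case: ltngtP => // H _.
Qed.

Lemma G1 u : Fac (phi (rcons u false)) = Fac (rcons u false).
Proof. have := Fac_phi u 0; rewrite big_ord1 /= !cats0 => ->. done. Qed.

Lemma G2 u : Fac (phi (rcons (rcons u false) true)) = Fac (rcons u false) + Fac (rcons (rcons u false) true).
Proof. have := Fac_phi u 1; rewrite !big_ord_recl big_ord0 /= cats0 addn0 cats1 => ->. done. Qed.

Lemma G3 u : Fac (phi (rcons u false ++ [:: true; true])) = Fac (rcons u false) + Fac (rcons (rcons u false) true).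
Proof.
have := Fac_phi u 2; rewrite !big_ord_recl big_ord0 /= cats0 addn0 cats1 => ->.
by rewrite Fac_bb addn0.
Qed.

Lemma G4 u : Fac (phi (rcons u false ++ [:: true; true; true])) = Fac (rcons u false) + Fac (rcons (rcons u false) true).
Proof.
have := Fac_phi u 3; rewrite !big_ord_recl big_ord0 /= cats0 addn0 cats1 => ->.
rewrite Fac_bb (_ : rcons u false ++ [:: true; true; true] = (rcons u false ++ [:: true]) ++ [:: true; true]).
  by rewrite Fac_bb !addn0.
by rewrite -catA.
Qed.

Lemma nseqS_r (T : Type) i (x : T) : nseq i.+1 x = rcons (nseq i x) x.
Proof. by elim: i => //= i <-. Qed.

Lemma wS v j : v ++ true :: nseq j.+1 false = rcons (v ++ true :: nseq j false) false.
Proof. by rewrite nseqS_r -rcons_cons rcons_cat. Qed.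

Lemma w0 v : v ++ true :: nseq 0 false = rcons v true.
Proof. by rewrite cats1. Qed.

Definition uw v t := v ++ false :: flatten (nseq t [:: true; false]).

Lemma flatten_nseqS (T : Type) t (l : seq T) : flatten (nseq t.+1 l) = flatten (nseq t l) ++ l.
Proof. by rewrite nseqS_r -cats1 flatten_cat /= cats0. Qed.

Lemma uwS v t : uw v t.+1 = uw v t ++ [:: true; false].
Proof. by rewrite /uw flatten_nseqS -catA. Qed.

Lemma uw0 v : uw v 0 = rcons v false.
Proof. by rewrite /uw /= cats1. Qed.

Lemma Psi_rtrue w : Psi (rcons w true) = rcons (phi (Psi w)) false.
Proof. by rewrite Psi_rcons phi_rcons cats1. Qed.

Lemma Psi_even v t : exists Z0, Psi (v ++ true :: nseq t.*2 false) = rcons Z0 false.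
Proof.
elim: t => [|t [Z0 IH]]; first by exists (phi (Psi v)); rewrite w0 Psi_rtrue.
exists (phi (phi Z0) ++ [:: false; true]).
rewrite doubleS !wS !Psi_rcons IH phi_rcons phi_cat /=.
by rewrite -cats1 -catA.
Qed.

Lemma Psi_odd v t : Psi (v ++ true :: nseq t.*2.+1 false) = rcons (Psi (rcons (uw v t) true)) true.
Proof.
elim: t => [|t IH].
  rewrite wS w0 uw0 Psi_rcons Psi_rtrue !Psi_rcons.
  by rewrite !phi_rcons -cats1 -catA.
rewrite doubleS (wS v t.*2.+2) (wS v t.*2.+1).
rewrite (_ : Psi (rcons (rcons (v ++ true :: nseq t.*2.+1 false) false) false) =
   phi (phi (Psi (v ++ true :: nseq t.*2.+1 false)))); last by rewrite !Psi_rcons.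
rewrite IH.
rewrite uwS (_ : uw v t ++ [:: true; false] = rcons (rcons (uw v t) true) false); last by rewrite -!cats1 -catA.
rewrite !Psi_rcons.
set P := Psi (uw v t).
by rewrite !phi_rcons phi_cat -!cats1 -!catA.
Qed.

Lemma XY1 v j : X (v ++ true :: nseq j false) = (X v + 1) * fib j.+2 + Y v * fib j.+1 /\
                Y (v ++ true :: nseq j false) = (X v + 1) * fib j.+1 + Y v * fib j.
Proof.
elim: j => [|j [IH1 IH2]]; first by rewrite w0 X_rcons Y_rcons /=; lia.
rewrite wS X_rcons Y_rcons IH1 IH2; change (nat_of_bool false) with 0.
rewrite (fibSS j.+1) (fibSS j); split; lia.
Qed.

Lemma XY2 v t : X (uw v t) + 1 = fib (t.*2).+2 * (X v + 1) + fib (t.*2).+1 * Y v /\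
                Y (uw v t) + 1 = fib (t.*2).+1 * (X v + 1) + fib (t.*2) * Y v.
Proof.
elim: t => [|t [IH1 IH2]]; first by rewrite uw0 X_rcons Y_rcons /=; lia.
rewrite uwS (_ : uw v t ++ [:: true; false] = rcons (rcons (uw v t) true) false); last by rewrite -!cats1 -catA.
rewrite !X_rcons !Y_rcons doubleS; change (nat_of_bool false) with 0; change (nat_of_bool true) with 1.
move: IH1 IH2; rewrite (fibSS (t.*2).+2) (fibSS (t.*2).+1) (fibSS t.*2) X_rcons; change (nat_of_bool true) with 1; split; lia.
Qed.

Lemma zeros_Psi k : Psi (nseq k false) = [::] /\ X (nseq k false) = 0 /\ Y (nseq k false) = 0.
Proof.
elim: k => [|k [IH1 [IH2 IH3]]]; first by rewrite /= X_nil Y_nil.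
by rewrite nseqS_r Psi_rcons X_rcons Y_rcons IH1 IH2 IH3.
Qed.

Lemma decomp v : (exists k, v = nseq k false) \/
  (exists v' i, v = v' ++ true :: nseq i false /\ size v' + i < size v).
Proof.
elim/last_ind: v => [|v d IH]; first by left; exists 0.
case: d.
  right; exists v, 0; rewrite w0 size_rcons; split=> //; lia.
case: IH => [[k ->]|[v' [i [-> Hs]]]].
  by left; exists k.+1; rewrite nseqS_r.
right; exists v', i.+1; rewrite wS size_rcons; split=> //; lia.
Qed.

Definition we v j := v ++ true :: nseq j false.
Arguments we : simpl never.
Lemma weS v j : we v j.+1 = rcons (we v j) false. Proof. exact: wS. Qed.
Lemma we0 v : we v 0 = rcons v true. Proof. exact: w0. Qed.
Lemma Psi_even' v t : exists Z0, Psi (we v t.*2) = rcons Z0 false. Proof. exact: Psi_even. Qed.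
Lemma Psi_odd' v t : Psi (we v t.*2.+1) = rcons (Psi (rcons (uw v t) true)) true. Proof. exact: Psi_odd. Qed.
Lemma XY1' v j : X (we v j) = (X v + 1) * fib j.+2 + Y v * fib j.+1 /\ Y (we v j) = (X v + 1) * fib j.+1 + Y v * fib j. Proof. exact: XY1. Qed.

Definition fm1 t := if t is t'.+1 then fib (t'.*2).+1 else 1.
Definition fy x y t := 1 + fib t.*2 * (1 + x) + fm1 t * y.
Definition fyb x y t := if t is t'.+1 then fib (t'.*2).+1 * (1 + x) + fib t'.*2 * y else (1 + x) - y.
Arguments fy : simpl never.
Arguments fyb : simpl never.

Lemma fm1_eq t : fib (t.*2).+1 = fm1 t + fib t.*2.
Proof. case: t => [|t] //. by rewrite /fm1 doubleS fibSS addnC. Qed.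

Definition Pe v t :=
  [/\ Fac (Psi (we v t.*2)) = fy (X v) (Y v) t, Fac (rcons (Psi (we v t.*2)) true) = fyb (X v) (Y v) t
    & Fac (rcons (Psi (we v t.*2)) false) = fy (X v) (Y v) t].

Definition Po v t :=
  [/\ Fac (Psi (we v t.*2.+1)) = fy (X v) (Y v) t, Fac (rcons (Psi (we v t.*2.+1)) true) = 0
    & Fac (rcons (Psi (we v t.*2.+1)) false) = fy (X v) (Y v) t + fyb (X v) (Y v) t].

Lemma size_uw v t : size (uw v t) = size v + t.*2 + 1.
Proof. elim: t => [|t IH]; rewrite ?uw0 ?size_rcons; first lia. rewrite uwS size_cat IH doubleS /=; lia. Qed.

Lemma Pe_Po v t : Pe v t -> Po v t.
Proof.
rewrite /Pe /Po weS Psi_rcons; have [Z0 ->] := Psi_even' v t; case=> H1 H2 H3.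
split.
- by rewrite G1.
- rewrite phi_rcons -cats1 -catA (_ : phi Z0 ++ img false ++ [:: true] = rcons (phi Z0) false ++ [:: true; true]).
    by rewrite Fac_bb.
  by rewrite -cats1 -catA.
- by rewrite (_ : rcons (phi (rcons Z0 false)) false = phi (rcons (rcons Z0 false) true)) ?G2 ?H1 ?H2 // !phi_rcons -cats1 -catA.
Qed.

Lemma fm10 : fm1 0 = 1. Proof. by []. Qed.
Lemma fm1S t : fm1 t.+1 = fib (t.*2).+1. Proof. by []. Qed.
Lemma fib0d : fib 0.*2 = 0. Proof. by []. Qed.

Lemma Po_Pe v t : Po v t -> Pe (uw v t) 0 -> Pe v t.+1.
Proof.
rewrite /Pe /Po => -[H1 H2 H3] [K1 K2 K3].
rewrite Psi_odd' in H1 H2 H3.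
rewrite (_ : 0.*2 = 0) // we0 in K1 K2 K3.
rewrite doubleS weS Psi_rcons Psi_odd'.
set P := Psi (rcons (uw v t) true) in H1 H2 H3 K1 K2 K3 *.
have HP : P = rcons (phi (Psi (uw v t))) false by rewrite /P Psi_rtrue.
have [_ HY] := XY2 v t.
have Hf := fm1_eq t.
rewrite /fy /fyb in H1 K1 K2 K3 *.
rewrite fib0d fm10 in K1 K3.
rewrite doubleS fibSS fm1S Hf.
rewrite Hf in HY.
split.
- rewrite HP G2 -HP H1 K1; lia.
- rewrite phi_rcons -cats1 -catA (_ : phi P ++ img true ++ [:: true] = phi (rcons P false)); last by rewrite phi_rcons.
  rewrite HP G1 -HP K3; lia.
- rewrite (_ : rcons (phi (rcons P true)) false = phi (rcons (phi (Psi (uw v t))) false ++ [:: true; true])); last first.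
    by rewrite HP -!cats1 !phi_cat -!catA.
  rewrite G3 -HP H1 K1; lia.
Qed.

Lemma fy_fyb x y s : y <= x -> fy x y s + fyb x y s = 1 + fib (s.*2).+1 * (1 + x) + fib s.*2 * y.
Proof.
case: s => [|s] H; rewrite /fy /fyb.
  rewrite fib0d fm10 /=; lia.
rewrite fm1S !doubleS !fibSS; lia.
Qed.

Lemma fy_eq x y s : fy x y s = 1 + fib s.*2 * (1 + x) + (fib (s.*2).+1 - fib s.*2) * y.
Proof. by rewrite /fy fm1_eq addnK. Qed.

Lemma Pe0 v : (forall v' s, size v' + s.*2 < size v -> Pe v' s) -> Pe v 0.
Proof.
move=> IH; rewrite /Pe (_ : 0.*2 = 0) // we0 Psi_rtrue.
set Zv := Psi v.
have E1 : rcons (phi Zv) false = phi (rcons Zv true) by rewrite phi_rcons cats1.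
have E2 : rcons (rcons (phi Zv) false) true = phi (rcons Zv false) by rewrite phi_rcons -!cats1 -catA.
have E3 : rcons (rcons (phi Zv) false) false = phi (Zv ++ [:: true; true]) by rewrite phi_cat -!cats1 -catA.
rewrite E2 E3 E1 /fy /fyb fib0d fm10.
have HYX := Y_le_X v.
case: (decomp v) => [[k Hk]|[v' [i [Hv Hs]]]].
  have [Z [HX HY]] := zeros_Psi k.
  rewrite /Zv Hk Z HX HY /= Fac_a Fac_ab Fac_aa; by split.
have HYX' := Y_le_X v'.
have := odd_double_half i; set s := i./2; case: (odd i) => /= Hi.
-
  have Hv' : v = we v' s.*2.+1 by rewrite Hv -Hi add1n.
  have HPo : Po v' s by apply: Pe_Po; apply: IH; rewrite Hv size_cat /= size_nseq; lia.
  have HPu : Pe (uw v' s) 0 by apply: IH; rewrite size_uw Hv size_cat /= size_nseq; lia.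
  move: HPo HPu; rewrite /Pe /Po (_ : 0.*2 = 0) // we0 -Hv' => -[H1 H2 H3] [K1 K2 K3].
  rewrite -/Zv in H1 H2 H3.
  have HZ : Zv = rcons (Psi (rcons (uw v' s) true)) true by rewrite /Zv Hv' Psi_odd'.
  set P := Psi (rcons (uw v' s) true) in HZ K1 K2 K3.
  have HP : P = rcons (phi (Psi (uw v' s))) false by rewrite /P Psi_rtrue.
  have [HX HY] := XY1' v' s.*2.+1; rewrite -Hv' in HX HY.
  have [_ HYu] := XY2 v' s.
  rewrite fy_fyb // in H3.
  rewrite fy_eq in H1.
  rewrite /fy /fyb fib0d fm10 in K1 K2 K3.
  have Hf := fm1_eq s.
  rewrite (fibSS s.*2.+1) (fibSS s.*2) in HX HY.
  have Hle : fib s.*2 <= fib (s.*2).+1 by rewrite Hf; lia.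
  split.
  + rewrite HZ (_ : rcons (rcons P true) true = rcons (phi (Psi (uw v' s))) false ++ [:: true; true]); last by rewrite HP -!cats1 -!catA.
    rewrite G3 -HP K1 -HZ H1; nia.
  + rewrite G1 H3; nia.
  + rewrite HZ (_ : rcons P true ++ [:: true; true] = rcons (phi (Psi (uw v' s))) false ++ [:: true; true; true]); last by rewrite HP -!cats1 -!catA.
    rewrite G4 -HP K1 -HZ H1; nia.
-
  have Hv' : v = we v' s.*2 by rewrite Hv -Hi add0n.
  have HPe : Pe v' s by apply: IH; rewrite Hv size_cat /= size_nseq; lia.
  move: HPe; rewrite /Pe -Hv' -/Zv => -[H1 H2 H3].
  have [Z0 HZ] := Psi_even' v' s; rewrite -Hv' -/Zv in HZ.
  have [HX HY] := XY1' v' s.*2; rewrite -Hv' in HX HY.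
  have Hs2 := fy_fyb s HYX'.
  rewrite -H1 -H2 in Hs2.
  rewrite fy_eq in H3.
  have Hf := fm1_eq s.
  rewrite (fibSS s.*2) in HX HY.
  have Hle : fib s.*2 <= fib (s.*2).+1 by rewrite Hf; lia.
  split.
  + rewrite HZ G2 -HZ; nia.
  + rewrite G1 H3; nia.
  + rewrite HZ G3 -HZ; nia.
Qed.

Lemma Pe_all v t : Pe v t.
Proof.
suff H : forall n v t, size v + t.*2 <= n -> Pe v t by exact: (H _ v t (leqnn _)).
elim=> [|n IH] {}v {}t H.
  case: t H => [|t] H; last by rewrite doubleS in H; lia.
  by apply: Pe0 => v' s H'; lia.
case: t H => [|t] H.
  by apply: Pe0 => v' s H'; apply: IH; lia.
apply: Po_Pe; first by apply: Pe_Po; apply: IH; rewrite doubleS in H; lia.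
by apply: IH; rewrite size_uw; rewrite doubleS in H; lia.
Qed.

Lemma V_we v j : V (fibval (bits (we v j))) = Fac (Psi (we v j)).
Proof. by rewrite V_Fac -/(X _) fibprefix_Psi. Qed.

Lemma bits_we z j : bits (we z j) = bits z ++ 1 :: nseq j 0.
Proof. by rewrite /bits /we map_cat /= map_nseq. Qed.

Lemma alt_word k : rcons (false :: flatten (nseq k [:: true; false])) true = flatten (nseq k.+1 [:: false; true]).
Proof. elim: k => [|k IH] //. by rewrite (_ : flatten (nseq k.+2 [:: false; true]) = [:: false; true] ++ flatten (nseq k.+1 [:: false; true])) // -IH. Qed.

Theorem proposition3 (z : seq bool) (k : nat) (hk : 1 <= k) :
  V (fibval (bits z ++ 1 :: nseq (2 * k) 0)) =
  V (fibval (bits z ++ 1 :: nseq (2 * k - 2) 0)) +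
  V (fibval (bits z ++ flatten (nseq k [:: 0; 1]))).
Proof.
case: k hk => [|k] // _.
rewrite (_ : 2 * k.+1 - 2 = k.*2); last by rewrite -mul2n; lia.
rewrite mul2n -!bits_we !V_we.
have [H1 _ _] := Pe_all z k.+1.
have [H2 _ _] := Pe_all z k.
have E : bits z ++ flatten (nseq k.+1 [:: 0; 1]) = bits (we (uw z k) 0).
  rewrite we0 /uw -cats1 -catA cats1 alt_word /bits map_cat; congr (_ ++ _).
  by rewrite map_flatten map_nseq.
rewrite E V_we.
have [H3 _ _] := Pe_all (uw z k) 0.
rewrite (_ : 0.*2 = 0) // in H3.
rewrite H1 H2 H3.
have [_ HYu] := XY2 z k.
have Hf := fm1_eq k.
rewrite /fy fib0d fm10 fm1S doubleS fibSS Hf.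
rewrite Hf in HYu.
lia.
Qed.
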